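(* Let $f\in D[t;\sigma,\delta]$ be monic of degree $m\ge2$ and let $B$ be a subring of $D$. (i) $f$ is $B$-weak semi-invariant if and only if $B\subseteq\mathrm{Nuc}_r(S_f)$. (ii) If $f$ is $B$-weak semi-invariant but not right invariant, then $B\subseteq \mathrm{Nuc}(S_f)\subseteq D$.
   Context: $D$ is an associative division ring, $\sigma$ a ring endomorphism of $D$, $\delta$ a left $\sigma$-derivation ($\delta(ab)=\sigma(a)\delta(b)+\delta(a)b$, additive). $R=D[t;\sigma,\delta]$ is the skew polynomial ring with $ta=\sigma(a)t+\delta(a)$. For monic $f$ of degree $m$, $S_f$ is the set of polynomials of degree $<m$ with multiplication $g\circ h=$ remainder of $gh$ upon right division by $f$ ($gh=qf+r$, $\deg r<m$). Associator $[x,y,z]=(xy)z-x(yz)$; $\mathrm{Nuc}_r(A)=\{x:[A,A,x]=0\}$; $\mathrm{Nuc}(A)=\{x:[x,A,A]=[A,x,A]=[A,A,x]=0\}$. $f$ is $B$-weak semi-invariant if $fB\subseteq Df$. $f$ is right invariant if $fR\subseteq Rf$ (i.e. $Rf$ is a two-sided ideal of $R$). *)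

(* Defs.v *)
From HB Require Import structures.
From mathcomp Require Import all_boot all_order all_algebra.
Set Implicit Arguments. Unset Strict Implicit. Unset Printing Implicit Defensive.
Import GRing.Theory.
Local Open Scope ring_scope.

(* An element sum_i a_i t^i
   (coefficients on the LEFT) is represented by the MathComp polynomial
   with coefficient sequence (a_i); addition is the usual one, and the
   multiplication is the skew one [smul] defined below, determined by
   t a = sigma(a) t + delta(a). *)
Section SkewPoly.
Variable D : nzRingType.
Variable sigma : {rmorphism D -> D}.
Variable delta : D -> D.

(* left multiplication by t:  t * (sum_j b_j t^j)
   = sum_j (sigma(b_j) t^(j+1) + delta(b_j) t^j) *)
Definition skew_mulX (p : {poly D}) : {poly D} :=
  map_poly (sigma : D -> D) p * 'X + map_poly delta p.

Definition smul (p q : {poly D}) : {poly D} :=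
  \sum_(i < size p) (p`_i)%:P * iter (nat_of_ord i) skew_mulX q.

(* Remainder of right division by a monic f:  g = q f + r, deg r < deg f.
   One step removes the leading term of g by subtracting (c t^k) f. *)
Fixpoint srem_rec (f : {poly D}) (n : nat) (g : {poly D}) : {poly D} :=
  match n with
  | 0 => g
  | n'.+1 =>
      if (size g < size f)%N then g
      else srem_rec f n'
             (g - smul (lead_coef g *: 'X^(size g - size f)) f)
  end.

Definition srem (f g : {poly D}) : {poly D} := srem_rec f (size g) g.

Definition in_Sf (f g : {poly D}) : Prop := (size g < size f)%N.

Definition Sf_mul (f g h : {poly D}) : {poly D} := srem f (smul g h).

Definition Sf_assoc (f x y z : {poly D}) : {poly D} :=
  Sf_mul f (Sf_mul f x y) z - Sf_mul f x (Sf_mul f y z).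

Definition in_Nucr (f x : {poly D}) : Prop :=
  in_Sf f x /\
  forall y z, in_Sf f y -> in_Sf f z -> Sf_assoc f y z x = 0.

Definition in_Nuc (f x : {poly D}) : Prop :=
  in_Sf f x /\
  forall y z, in_Sf f y -> in_Sf f z ->
    [/\ Sf_assoc f x y z = 0, Sf_assoc f y x z = 0 & Sf_assoc f y z x = 0].

Definition weak_semi_invariant (f : {poly D}) (B : {pred D}) : Prop :=
  forall b, b \in B -> exists d : D, smul f b%:P = smul d%:P f.

Definition right_invariant (f : {poly D}) : Prop :=
  forall g : {poly D}, exists h : {poly D}, smul f g = smul h f.

End SkewPoly.

(* Main.v *)
Require Import Defs.
From HB Require Import structures.
From mathcomp Require Import all_boot all_order all_algebra.
From mathcomp Require Import zify.
Import GRing.Theory.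
Local Open Scope ring_scope.

Section Skew.
Variable D : unitRingType.
Hypothesis HD : forall x : D, x != 0 -> x \is a GRing.unit.
Variable sigma : {rmorphism D -> D}.
Variable delta : D -> D.
Hypothesis Hdadd : forall a b : D, delta (a + b) = delta a + delta b.
Hypothesis Hdmul : forall a b : D, delta (a * b) = sigma a * delta b + delta a * b.

Local Notation T := (skew_mulX sigma delta).
Local Notation smul := (smul sigma delta).

Lemma delta0 : delta 0 = 0.
Proof. have h := Hdadd 0 0; rewrite addr0 in h; by apply: (addrI (delta 0)); rewrite -h addr0. Qed.

Lemma deltaN a : delta (- a) = - delta a.
Proof. by apply/eqP; rewrite -subr_eq0 opprK -Hdadd addNr delta0. Qed.

Lemma delta1 : delta 1 = 0.
Proof.
have h := Hdmul 1 1; rewrite rmorph1 !mul1r mulr1 in h.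
by apply: (addrI (delta 1)); rewrite -h addr0.
Qed.

Lemma coefT p i : (T p)`_i = (if i == 0%N then 0 else sigma p`_i.-1) + delta p`_i.
Proof.
by rewrite /skew_mulX coefD coefMX !coef_map_id0 ?rmorph0 ?delta0 //.
Qed.

Lemma T_add p q : T (p + q) = T p + T q.
Proof.
apply/polyP => i; rewrite coefD !coefT !coefD Hdadd.
by case: (i == 0%N); rewrite ?rmorphD ?add0r // addrACA.
Qed.

Lemma T0 : T 0 = 0.
Proof. apply/polyP => i; by rewrite coefT !coef0 rmorph0 delta0 if_same addr0. Qed.

Lemma T_opp p : T (- p) = - T p.
Proof. by apply/eqP; rewrite -subr_eq0 opprK -T_add addNr T0. Qed.

Lemma T_sub p q : T (p - q) = T p - T q.
Proof. by rewrite T_add T_opp. Qed.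

Lemma T_scale c p : T (c *: p) = sigma c *: T p + delta c *: p.
Proof.
apply/polyP => i; rewrite coefT coefD -!mul_polyC !coefCM coefT Hdmul mulrDr.
by case: (i == 0%N); rewrite ?mulr0 ?add0r ?rmorphM ?addrA.
Qed.

Lemma iterT_add n p q : iter n T (p + q) = iter n T p + iter n T q.
Proof. by elim: n => //= n ->; rewrite T_add. Qed.
Lemma iterT0 n : iter n T 0 = 0.
Proof. by elim: n => //= n ->; rewrite T0. Qed.
Lemma iterT_opp n p : iter n T (- p) = - iter n T p.
Proof. by elim: n => //= n ->; rewrite T_opp. Qed.

Definition sm n (p q : {poly D}) := \sum_(i < n) p`_i *: iter i T q.

Lemma smulE p q : smul p q = sm (size p) p q.
Proof. by rewrite /Defs.smul /sm; apply: eq_bigr => i _; rewrite mul_polyC. Qed.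

Lemma sm_ext n (p q : {poly D}) : (size p <= n)%N -> sm n p q = smul p q.
Proof.
move=> H; rewrite smulE -(subnKC H); elim: (n - size p)%N => [|k IH]; first by rewrite addn0.
by rewrite /sm addnS big_ord_recr /= -/(sm _ p q) IH nth_default ?leq_addr // scale0r addr0.
Qed.


Lemma smulD_l (p q r : {poly D}) : smul (p + q) r = smul p r + smul q r.
Proof.
set n := maxn (size p) (size q).
rewrite -(@sm_ext n p) ?leq_maxl // -(@sm_ext n q) ?leq_maxr //.
rewrite -(@sm_ext n (p + q)) ?size_polyD //.
by rewrite /sm -big_split; apply: eq_bigr => i _; rewrite coefD scalerDl.
Qed.

Lemma smul0_l (r : {poly D}) : smul 0 r = 0.
Proof. by rewrite smulE size_poly0 /sm big_ord0. Qed.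

Lemma smulN_l (p r : {poly D}) : smul (- p) r = - smul p r.
Proof. by apply/eqP; rewrite -subr_eq0 opprK -smulD_l addNr smul0_l. Qed.

Lemma smulB_l (p q r : {poly D}) : smul (p - q) r = smul p r - smul q r.
Proof. by rewrite smulD_l smulN_l. Qed.

Lemma smulZ_l c (p r : {poly D}) : smul (c *: p) r = c *: smul p r.
Proof.
rewrite -(@sm_ext (size p) (c *: p)) ?size_scale_leq // smulE /sm scaler_sumr.
by apply: eq_bigr => i _; rewrite coefZ scalerA.
Qed.

Lemma smulD_r (p q r : {poly D}) : smul p (q + r) = smul p q + smul p r.
Proof.
by rewrite !smulE /sm -big_split; apply: eq_bigr => i _; rewrite iterT_add scalerDr.
Qed.

Lemma smul0_r (p : {poly D}) : smul p 0 = 0.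
Proof. by rewrite smulE /sm big1 // => i _; rewrite iterT0 scaler0. Qed.

Lemma smulN_r (p r : {poly D}) : smul p (- r) = - smul p r.
Proof. by apply/eqP; rewrite -subr_eq0 opprK -smulD_r addNr smul0_r. Qed.

Lemma smulB_r (p q r : {poly D}) : smul p (q - r) = smul p q - smul p r.
Proof. by rewrite smulD_r smulN_r. Qed.

Lemma smulXn k (q : {poly D}) : smul 'X^k q = iter k T q.
Proof.
rewrite smulE size_polyXn /sm big_ord_recr /= coefXn eqxx scale1r big1 ?add0r // => i _.
by rewrite coefXn ltn_eqF // scale0r.
Qed.

Lemma smul1 (q : {poly D}) : smul 1 q = q.
Proof. by rewrite -(expr0 'X) smulXn. Qed.

Lemma smulC c (q : {poly D}) : smul c%:P q = c *: q.
Proof. by rewrite -alg_polyC smulZ_l smul1. Qed.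

Lemma T_Xn i : T ('X^i : {poly D}) = 'X^(i.+1).
Proof.
apply/polyP => j; rewrite coefT !coefXn.
case: j => [|j] /=; first by rewrite add0r; case: (0 == i)%N; rewrite ?delta1 ?delta0.
rewrite eqSS; case: (j == i); rewrite rmorph_nat;
by case: (j.+1 == i)%N; rewrite ?delta1 ?delta0 addr0.
Qed.

Lemma iterT1 i : iter i T 1 = 'X^i.
Proof. by elim: i => [|i IH] /=; rewrite ?expr0 // IH T_Xn. Qed.

Lemma smul_r1 (p : {poly D}) : smul p 1 = p.
Proof.
rewrite smulE /sm -[RHS]coefK poly_def.
by apply: eq_bigr => i _; rewrite iterT1.
Qed.

Lemma size_T (g : {poly D}) : (size (T g) <= (size g).+1)%N.
Proof.
apply/leq_sizeP => j hj; rewrite coefT.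
case: j hj => [//|j] hj /=.
by rewrite !nth_default ?rmorph0 ?delta0 ?addr0 // ltnW.
Qed.

Lemma T_sum n (F : 'I_n -> {poly D}) : T (\sum_(i < n) F i) = \sum_(i < n) T (F i).
Proof. exact: (big_morph T T_add T0). Qed.

Lemma smulT_l (g r : {poly D}) : smul (T g) r = T (smul g r).
Proof.
rewrite -(@sm_ext (size g).+1 (T g)) ?size_T // smulE /sm T_sum.
under [RHS]eq_bigr => i _ do rewrite T_scale.
rewrite big_split /=.
under eq_bigr => i _ do rewrite coefT scalerDl.
rewrite big_split /= big_ord_recl big_ord_recr /=.
by rewrite [g`_(size g)]nth_default // delta0 !scale0r add0r addr0.
Qed.

Lemma smul_iterT n (g r : {poly D}) : smul (iter n T g) r = iter n T (smul g r).
Proof. by elim: n => //= n IH; rewrite smulT_l IH. Qed.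

Lemma smul_sum_l n (F : 'I_n -> {poly D}) r :
  smul (\sum_(i < n) F i) r = \sum_(i < n) smul (F i) r.
Proof. exact: (big_morph (fun p => smul p r) (fun p q => smulD_l p q r) (smul0_l r)). Qed.

Lemma smul_assoc (p q r : {poly D}) : smul (smul p q) r = smul p (smul q r).
Proof.
rewrite [smul p q]smulE /sm smul_sum_l [RHS]smulE /sm.
by apply: eq_bigr => i _; rewrite smulZ_l smul_iterT.
Qed.


Lemma lt_size_sub (p q : {poly D}) n :
  (size p <= n.+1)%N -> (size q <= n.+1)%N -> (p`_n = q`_n :> D) -> (size (p - q)%R <= n)%N.
Proof.
move=> /leq_sizeP hp /leq_sizeP hq hn; apply/leq_sizeP => j hj.
rewrite coefB; case: (ltngtP j n) => [|hjn|->]; first by rewrite ltnNge hj.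
  by rewrite hp // hq // subr0.
by rewrite hn subrr.
Qed.

Lemma coef_nz_size (p : {poly D}) i : p`_i != 0 -> (i < size p)%N.
Proof. by apply: contraR; rewrite -leqNgt => /leq_sizeP ->. Qed.

Lemma size_iterT n (q : {poly D}) : (size (iter n T q) <= size q + n)%N.
Proof.
elim: n => [|n IH] /=; first by rewrite addn0.
by apply: leq_trans (size_T _) _; rewrite addnS ltnS.
Qed.

Lemma size_smul (p q : {poly D}) : (size (smul p q) <= (size p + size q).-1)%N.
Proof.
have [->|qn0] := eqVneq q 0; first by rewrite smul0_r size_poly0.
rewrite smulE /sm; elim/big_ind: _ => //; first by rewrite size_poly0.
- by move=> x y hx hy; apply: leq_trans (size_polyD _ _) _; rewrite geq_max hx hy.
move=> i _; apply: leq_trans (size_scale_leq _ _) _.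
apply: leq_trans (size_iterT _ _) _.
have hs : (0 < size q)%N by rewrite size_poly_gt0.
have hi := ltn_ord i.
move: hs hi; move: (size p) (size q) (nat_of_ord i) => a b c; lia.
Qed.

Lemma monic_T (q : {poly D}) : q \is monic -> (T q \is monic) /\ size (T q) = (size q).+1.
Proof.
move=> hq.
have hs : (0 < size q)%N by rewrite size_poly_gt0 monic_neq0.
have hc : (T q)`_(size q) = 1.
  rewrite coefT -(prednK hs) /= (prednK hs) -lead_coefE (eqP hq) rmorph1.
  by rewrite nth_default // delta0 addr0.
have hsz : size (T q) = (size q).+1.
  by apply/eqP; rewrite eqn_leq size_T /=; apply: coef_nz_size; rewrite hc oner_neq0.
by split => //; rewrite monicE lead_coefE hsz /= hc.
Qed.

Lemma monic_iterT n (q : {poly D}) : q \is monic ->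
  (iter n T q \is monic) /\ size (iter n T q) = (size q + n)%N.
Proof.
move=> hq; elim: n => [|n [IH1 IH2]] /=; first by rewrite addn0.
by have [h1 h2] := @monic_T _ IH1; rewrite h2 IH2 addnS.
Qed.

Lemma smul_monic (p q : {poly D}) : q \is monic -> p != 0 ->
  size (smul p q) = (size p + size q).-1 /\ lead_coef (smul p q) = lead_coef p.
Proof.
move=> hq hp.
have hs : (0 < size q)%N by rewrite size_poly_gt0 monic_neq0.
have hps : (0 < size p)%N by rewrite size_poly_gt0.
move Hn : (size p).-1 => n; have Hsp : size p = n.+1 by rewrite -Hn prednK.
move Hs' : (size q).-1 => s'; have Hsq : size q = s'.+1 by rewrite -Hs' prednK.
have hc : (smul p q)`_(n + s') = lead_coef p.
  rewrite smulE Hsp /sm big_ord_recr /= coefD.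
  have [hm hsz] := monic_iterT n _ hq.
rewrite coefZ.
  have e : (n + s' = (size (iter n T q)).-1)%N by rewrite hsz Hsq addSn /= addnC.
  rewrite e -lead_coefE (eqP hm) mulr1 [lead_coef p]lead_coefE Hsp /=.
  have -> : (\sum_(i < n) p`_i *: iter i T q)`_(size (iter n T q)).-1 = 0.
    suff /leq_sizeP H : (size (\sum_(i < n) p`_i *: iter i T q)%R <= (size (iter n T q)).-1)%N by apply: H.
    elim/big_ind: _ => //; first by rewrite size_poly0.
    - by move=> x y hx hy; apply: leq_trans (size_polyD _ _) _; rewrite geq_max hx hy.
    move=> i _; apply: leq_trans (size_scale_leq _ _) _.
    apply: leq_trans (size_iterT _ _) _.
    have := ltn_ord i; rewrite hsz Hsq; move: (nat_of_ord i) => a; lia.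
  by rewrite add0r.
have hsz : size (smul p q) = (n + s').+1.
  apply/eqP; rewrite eqn_leq; apply/andP; split.
    by apply: leq_trans (size_smul _ _) _; rewrite Hsp Hsq addSn addnS.
  by apply: coef_nz_size; rewrite hc lead_coef_eq0.
split; first by rewrite hsz Hsp Hsq addSn addnS.
by rewrite lead_coefE hsz /= hc.
Qed.


Section Rem.
Variable f : {poly D}.
Hypothesis Hf : f \is monic.

Local Notation srem := (srem sigma delta f).

Lemma sizef_gt0 : (0 < size f)%N.
Proof. by rewrite size_poly_gt0 monic_neq0. Qed.

Lemma srem_step (g : {poly D}) : (size f <= size g)%N ->
  (size (g - smul (lead_coef g *: 'X^(size g - size f)) f)%R < size g)%N.
Proof.
move=> hle.
have hg : (0 < size g)%N := leq_trans sizef_gt0 hle.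
set k := (size g - size f)%N.
have [hm hsz] := monic_iterT k _ Hf.
rewrite subnKC // in hsz.
rewrite smulZ_l smulXn -(prednK hg) ltnS; apply: lt_size_sub.
- by rewrite prednK.
- by apply: leq_trans (size_scale_leq _ _) _; rewrite hsz prednK.
rewrite -mul_polyC coefCM.
have e1 : (iter k T f)`_(size g).-1 = 1 by rewrite -hsz -lead_coefE (eqP hm).
by rewrite e1 mulr1 lead_coefE.
Qed.

Lemma srem_rec_spec n (g : {poly D}) : (size g <= n)%N ->
  (size (srem_rec sigma delta f n g) < size f)%N /\
  exists q, g = smul q f + srem_rec sigma delta f n g.
Proof.
elim: n g => [|n IH] g hg /=.
  move: hg; rewrite leqn0 size_poly_eq0 => /eqP ->.
  by split; [rewrite size_poly0 sizef_gt0 | exists 0; rewrite smul0_l add0r].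
case: (ltnP (size g) (size f)) => hlt; first by split => //; exists 0; rewrite smul0_l add0r.
have hs := @srem_step g hlt.
have hs' : (size (g - smul (lead_coef g *: 'X^(size g - size f)) f)%R <= n)%N.
  by rewrite -ltnS; apply: leq_trans hs hg.
have [h1 [q hq]] := IH _ hs'.
split => //; exists (q + lead_coef g *: 'X^(size g - size f)).
by rewrite smulD_l -addrA [X in _ + X]addrC addrA -hq subrK.
Qed.

Lemma rem_spec (g : {poly D}) :
  (size (srem g) < size f)%N /\ exists q, g = smul q f + srem g.
Proof. exact: srem_rec_spec (leqnn _). Qed.

Lemma rem_uniq (g q r : {poly D}) : (size r < size f)%N -> g = smul q f + r -> srem g = r.
Proof.
move=> hr hg; have [h1 [q' hq']] := rem_spec g.
have E : smul (q - q') f = srem g - r.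
  rewrite smulB_l.
  have -> : smul q f = g - r by rewrite hg addrK.
  have -> : smul q' f = g - srem g by rewrite {1}hq' addrK.
  by rewrite opprB addrC addrA subrK.
have [h|h] := eqVneq (q - q') 0.
  by move: E; rewrite h smul0_l => /eqP; rewrite eq_sym subr_eq0 => /eqP.
have [hs _] := @smul_monic (q - q') f Hf h.
have : (size (srem g - r)%R < size f)%N.
  by apply: leq_ltn_trans (size_polyD _ _) _; rewrite size_polyN gtn_max h1 hr.
rewrite -E hs.
have : (0 < size (q - q')%R)%N by rewrite size_poly_gt0.
by move: (size (q - q')) (size f) => a b; lia.
Qed.

Lemma rem_small (g : {poly D}) : (size g < size f)%N -> srem g = g.
Proof. by move=> h; apply: (@rem_uniq _ 0); rewrite ?smul0_l ?add0r. Qed.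

Lemma rem_mul (q : {poly D}) : srem (smul q f) = 0.
Proof. by apply: (@rem_uniq _ q); rewrite ?size_poly0 ?sizef_gt0 ?addr0. Qed.

Lemma rem_add (g h : {poly D}) : srem (g + h) = srem g + srem h.
Proof.
have [h1 [q1 e1]] := rem_spec g; have [h2 [q2 e2]] := rem_spec h.
apply: (@rem_uniq _ (q1 + q2)).
  by apply: leq_ltn_trans (size_polyD _ _) _; rewrite gtn_max h1 h2.
by rewrite smulD_l {1}e1 {1}e2 addrACA.
Qed.

Lemma rem_scale c (g : {poly D}) : srem (c *: g) = c *: srem g.
Proof.
have [h1 [q1 e1]] := rem_spec g.
apply: (@rem_uniq _ (c *: q1)).
  by apply: leq_ltn_trans (size_scale_leq _ _) _.
by rewrite smulZ_l {1}e1 scalerDr.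
Qed.

Lemma rem_opp (g : {poly D}) : srem (- g) = - srem g.
Proof. by rewrite -scaleN1r rem_scale scaleN1r. Qed.

Lemma rem_sub (g h : {poly D}) : srem (g - h) = srem g - srem h.
Proof. by rewrite rem_add rem_opp. Qed.

Lemma rem_addmul (g q : {poly D}) : srem (g + smul q f) = srem g.
Proof. by rewrite rem_add rem_mul addr0. Qed.

Lemma rem_submul (g q : {poly D}) : srem (g - smul q f) = srem g.
Proof. by rewrite rem_sub rem_mul subr0. Qed.

End Rem.

Lemma scale_eq0 c (p : {poly D}) : c != 0 -> c *: p = 0 -> p = 0.
Proof.
move=> hc hp; have hu := HD c hc.
by rewrite -[p]scale1r -(mulVr hu) -scalerA hp scaler0.
Qed.

Lemma main_sec (f : {poly D}) (Hmonic : f \is monic) (Hdeg : (2 < size f)%N)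
  (B : {pred D}) (HB : subring_closed B) :
  (weak_semi_invariant sigma delta f B <->
     (forall b, b \in B -> in_Nucr sigma delta f b%:P))
  /\
  (weak_semi_invariant sigma delta f B ->
   ~ right_invariant sigma delta f ->
     (forall b, b \in B -> in_Nuc sigma delta f b%:P) /\
     (forall x, in_Nuc sigma delta f x -> (size x <= 1)%N)).
Proof.
have hb1 : forall b : D, in_Sf f b%:P.
  by move=> b; rewrite /in_Sf; apply: leq_ltn_trans (size_polyC_leq1 b) _; apply: ltnW.
have P1 : weak_semi_invariant sigma delta f B ->
     (forall b, b \in B -> in_Nucr sigma delta f b%:P).
  move=> Hw b hb; split; first exact: hb1.
  move=> y z hy hz; rewrite /Sf_assoc /Sf_mul.
  have [d hd] := Hw b hb.
  have [_ [Q eQ]] := @rem_spec f Hmonic (smul y z).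
  have [_ [Q' eQ']] := @rem_spec f Hmonic (smul z b%:P).
  have r1 : srem sigma delta f (smul y z) = smul y z - smul Q f.
    by rewrite {2}eQ addrC addKr.
  have r2 : srem sigma delta f (smul z b%:P) = smul z b%:P - smul Q' f.
    by rewrite {2}eQ' addrC addKr.
  rewrite r1 r2 smulB_l smulB_r smul_assoc [smul (smul Q f) _]smul_assoc hd -[smul Q (smul _ f)]smul_assoc rem_submul //.
  by rewrite -[smul y (smul Q' f)]smul_assoc rem_submul // subrr.
split.
  split; first exact: P1.
  move=> H b hb; have [_ Hn] := H b hb.
  move Hk : (size f - 2)%N => k.
  have Hsf : size f = k.+2 by rewrite -Hk; move: (size f) Hdeg => a; lia.
  have hx : in_Sf f ('X : {poly D}).
  by rewrite /in_Sf size_polyX.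
  have hy : in_Sf f 'X^k by rewrite /in_Sf size_polyXn Hsf.
  have A := Hn _ _ hx hy; move: A; rewrite /Sf_assoc /Sf_mul.
  have eX : forall q : {poly D}, smul 'X q = T q.
    by move=> q; rewrite -['X]expr1 smulXn.
  rewrite eX T_Xn.
  have -> : srem sigma delta f 'X^(k.+1) = 'X^(k.+1) - f.
    apply: (@rem_uniq f Hmonic _ 1); last by rewrite smul1 addrC subrK.
    rewrite Hsf ltnS; apply: lt_size_sub; rewrite ?size_polyXn ?Hsf //.
    have e : k.+1 = (size f).-1 by rewrite Hsf.
    by rewrite coefXn eqxx e -lead_coefE (eqP Hmonic).
  rewrite (@rem_small f Hmonic (smul 'X^k b%:P)); last first.
    apply: leq_ltn_trans (size_smul _ _) _; rewrite size_polyXn Hsf.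
    by have := size_polyC_leq1 b; move: (size b%:P) => a; lia.
  rewrite eX smulB_l smulXn /= smulXn rem_sub //.
  rewrite addrAC subrr add0r => /eqP; rewrite oppr_eq0 => /eqP h0.
  have [_ [q eq]] := @rem_spec f Hmonic (smul f b%:P).
  rewrite h0 addr0 in eq.
  exists q`_0; rewrite -size1_polyC //.
  have [->|qn0] := eqVneq q 0; first by rewrite size_poly0.
  have [hs _] := smul_monic q f Hmonic qn0.
  have := size_smul f b%:P; rewrite eq hs.
  have := size_polyC_leq1 b; have := size_poly_gt0 q; rewrite qn0.
  by move: (size b%:P) (size q) (size f) Hdeg => a c e; lia.
move=> Hw Hnri.
have Hnr := P1 Hw.
split.
  move=> b hb; split; first exact: hb1.
  move=> y z hy hz; split; last by have [_ ->] := Hnr b hb.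
    rewrite /Sf_assoc /Sf_mul smulC (@rem_small f Hmonic (b *: y)); last first.
      by apply: leq_ltn_trans (size_scale_leq _ _) _.
    rewrite smulZ_l rem_scale // smulC (@rem_small f Hmonic (b *: srem sigma delta f (smul y z))) ?subrr //.
    apply: leq_ltn_trans (size_scale_leq _ _) _.
    by have [] := @rem_spec f Hmonic (smul y z).
  rewrite /Sf_assoc /Sf_mul smulC (@rem_small f Hmonic (b *: z)); last first.
    by apply: leq_ltn_trans (size_scale_leq _ _) _.
  rewrite (@rem_small f Hmonic (smul y b%:P)); last first.
    apply: leq_ltn_trans (size_smul _ _) _.
    move: hy; rewrite /in_Sf; have := size_polyC_leq1 b; move: (size b%:P) (size y) (size f) => a c e; lia.
  by rewrite smul_assoc smulC subrr.
move=> x [hxS Hn]; rewrite leqNgt; apply/negP => hx2; apply: Hnri.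
suff Hz : forall z, in_Sf f z -> srem sigma delta f (smul f z) = 0.
  move=> g.
  have [_ [Q eQ]] := @rem_spec f Hmonic g.
  have [_ [h eh]] := @rem_spec f Hmonic (smul f (srem sigma delta f g)).
  rewrite Hz in eh; last by have [] := @rem_spec f Hmonic g.
  exists (smul f Q + h).
  by rewrite {1}eQ smulD_r -smul_assoc eh addr0 smulD_l.
move=> z hz.
have hxn0 : x != 0 by rewrite -size_poly_gt0; apply: leq_trans hx2.
set y : {poly D} := 'X^(size f - size x).
have hym : y \is monic by rewrite monicXn.
have hy : in_Sf f y.
  rewrite /in_Sf size_polyXn; move: hxS; rewrite /in_Sf.
  by move: (size x) (size f) hx2 => a c; lia.
have [A1 _ _] := Hn y z hy hz.
move: A1; rewrite /Sf_assoc /Sf_mul.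
have [hs hl] := smul_monic x y hym hxn0.
set c := lead_coef x.
have hsm : size (smul x y) = size f.
  rewrite hs /y size_polyXn; move: hxS; rewrite /in_Sf.
  by move: (size x) (size f) hx2 => a e; lia.
have hf0 : (0 < size f)%N by apply: ltnW; apply: ltnW.
have -> : srem sigma delta f (smul x y) = smul x y - c *: f.
  apply: (@rem_uniq f Hmonic _ c%:P); last by rewrite smulC addrC subrK.
  rewrite -(prednK hf0) ltnS; apply: lt_size_sub.
  - by rewrite hsm prednK.
  - by apply: leq_trans (size_scale_leq _ _) _; rewrite prednK.
  rewrite -mul_polyC coefCM -hsm -lead_coefE hl hsm -lead_coefE (eqP Hmonic) mulr1 //.
have [_ [Q eQ]] := @rem_spec f Hmonic (smul y z).
have r1 : srem sigma delta f (smul y z) = smul y z - smul Q f.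
  by rewrite {2}eQ addrC addKr.
rewrite r1 smulB_r -[smul x (smul Q f)]smul_assoc rem_submul // smulB_l smulZ_l rem_sub // rem_scale // smul_assoc.
rewrite addrAC subrr add0r => /eqP; rewrite oppr_eq0 => /eqP.
by apply: scale_eq0; rewrite lead_coef_eq0.
Qed.

End Skew.

Theorem mainTheorem3
  (D : unitRingType)
  (HD : forall x : D, x != 0 -> x \is a GRing.unit)
  (sigma : {rmorphism D -> D})
  (delta : D -> D)
  (Hdadd : forall a b : D, delta (a + b) = delta a + delta b)
  (Hdmul : forall a b : D, delta (a * b) = sigma a * delta b + delta a * b)
  (f : {poly D}) (Hmonic : f \is monic) (Hdeg : (2 < size f)%N)
  (B : {pred D}) (HB : subring_closed B) :
  (weak_semi_invariant sigma delta f B <->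
     (forall b, b \in B -> in_Nucr sigma delta f b%:P))
  /\
  (weak_semi_invariant sigma delta f B ->
   ~ right_invariant sigma delta f ->
     (forall b, b \in B -> in_Nuc sigma delta f b%:P) /\
     (forall x, in_Nuc sigma delta f x -> (size x <= 1)%N)).
Proof. exact: (@main_sec D HD sigma delta Hdadd Hdmul f Hmonic Hdeg B HB). Qed.
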